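(* Let $d\ge1$, $n\ge0$, and for an $\mathbf{OI}_d$-morphism $\phi=(f,g)\colon[n]\to[m]$ let $w(\phi)$ be the word of length $m$ in the alphabet $\{*,1,\dots,d\}$ whose $i$-th letter is $*$ if $i\in f([n])$ and is $g(i)$ otherwise. Then $\phi$ is determined by $w(\phi)$, and for $\mathbf{OI}_d$-morphisms $\phi\colon[n]\to[m]$, $\phi'\colon[n]\to[m']$, there exists an $\mathbf{OI}_d$-morphism $\psi\colon[m]\to[m']$ with $\psi\circ\phi=\phi'$ if and only if $w(\phi)$ is a (not necessarily contiguous) subsequence of $w(\phi')$. Consequently the set $X_n=\coprod_{m\ge n}\hom_{\mathbf{OI}_d}([n],[m])$, partially ordered by $\phi\le\phi'$ iff $\phi'=\psi\circ\phi$ for some $\mathbf{OI}_d$-morphism $\psi$, is well-ordered in the sense that every infinite sequence $\phi_1,\phi_2,\dots$ in $X_n$ has $i<j$ with $\phi_i\le\phi_j$.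
   Context: $\mathbf{OI}_d$ is the category whose objects are finite totally ordered sets; a morphism $S\to T$ is a pair $(f,g)$ with $f\colon S\to T$ an order-preserving injection and $g\colon T\setminus f(S)\to[d]=\{1,\dots,d\}$ arbitrary; the composite of $(f,g)\colon S\to T$ and $(f',g')\colon T\to U$ is $(f'\circ f,g'')$ where $g''(u)=g'(u)$ for $u\notin f'(T)$ and $g''(f'(t))=g(t)$ for $t\in T\setminus f(S)$. $[n]=\{1,\dots,n\}$ with its usual order. *)

(* Defs.v *)
From mathcomp Require Import all_boot.
Set Implicit Arguments. Unset Strict Implicit. Unset Printing Implicit Defensive.

(* An OI_d morphism [n] -> [m]: an order-preserving injection f : [n] -> [m]
   (i.e. strictly increasing), together with g : [m] \ f([n]) -> [d].
   [k] = {1..k} is modelled by 'I_k = {0..k-1} (same order), and [d] by 'I_d. *)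
Record OIhom (d n m : nat) := OIHom {
  homf : 'I_n -> 'I_m;
  homf_mono : forall i j : 'I_n, i < j -> homf i < homf j;
  homg : forall t : 'I_m, t \notin codom homf -> 'I_d
}.

Section Comp.
Variables (d n m k : nat) (psi : OIhom d m k) (phi : OIhom d n m).

Lemma comp_mono (i j : 'I_n) : i < j -> homf psi (homf phi i) < homf psi (homf phi j).
Proof. by move=> H; apply: homf_mono; apply: homf_mono. Qed.

Definition comp_f (i : 'I_n) : 'I_k := homf psi (homf phi i).

Lemma comp_g_proof (u : 'I_k) (hu : u \notin codom comp_f) (H : u \in codom (homf psi)) :
  @iinv _ _ (homf psi) (mem 'I_m) u H \notin codom (homf phi).
Proof.
apply/codomP => [[x Hx]]; move/codomP: hu; apply; exists x.
by rewrite /comp_f -Hx f_iinv.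
Qed.

(* g''(u) = g'(u) if u is not in the image of f', and g(t) if u = f'(t). *)
Definition comp_g (u : 'I_k) (hu : u \notin codom comp_f) : 'I_d :=
  (if u \in codom (homf psi) as b return (u \in codom (homf psi)) = b -> 'I_d
   then fun H => @homg _ _ _ phi _ (comp_g_proof hu H)
   else fun H => @homg _ _ _ psi u (negbT H)) (erefl _).

Definition OIcomp : OIhom d n k := OIHom comp_mono comp_g.
End Comp.

(* The word w(phi): letter i is None (= '*') if i is in f([n]), Some (g i) otherwise. *)
Definition OIletter d n m (phi : OIhom d n m) (i : 'I_m) : option 'I_d :=
  (if i \in codom (homf phi) as b return (i \in codom (homf phi)) = b -> option 'I_d
   then fun _ => None
   else fun H => Some (@homg _ _ _ phi i (negbT H))) (erefl _).

Definition OIword d n m (phi : OIhom d n m) : seq (option 'I_d) :=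
  [seq OIletter phi i | i <- enum 'I_m].

Definition OIle d n (x y : {m : nat & OIhom d n m}) : Prop :=
  exists psi : OIhom d (tag x) (tag y), OIcomp psi (tagged x) = tagged y.

(* Main.v *)
Require Import Defs.
From mathcomp Require Import all_boot.
From Stdlib Require Import ProofIrrelevance FunctionalExtensionality Classical ClassicalEpsilon.
Set Implicit Arguments. Unset Strict Implicit. Unset Printing Implicit Defensive.

Lemma dep_ifT (b : bool) (T : Type) (F1 : b = true -> T) (F2 : b = false -> T) (H : b = true) :
  (if b as b' return b = b' -> T then F1 else F2) (erefl b) = F1 H.
Proof. by subst b. Qed.

Lemma dep_ifF (b : bool) (T : Type) (F1 : b = true -> T) (F2 : b = false -> T) (H : b = false) :
  (if b as b' return b = b' -> T then F1 else F2) (erefl b) = F2 H.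
Proof. by subst b. Qed.

Section OI.
Variable d : nat.

Lemma homgE n m (phi : OIhom d n m) t1 t2 (H1 : t1 \notin codom (homf phi))
  (H2 : t2 \notin codom (homf phi)) : t1 = t2 -> homg H1 = homg H2.
Proof. by move=> e; subst t2; rewrite (bool_irrelevance H1 H2). Qed.

Lemma letter_in n m (phi : OIhom d n m) i : i \in codom (homf phi) -> OIletter phi i = None.
Proof. by move=> H; rewrite /OIletter (dep_ifT _ _ H). Qed.

Lemma letter_out n m (phi : OIhom d n m) i (H : i \notin codom (homf phi)) :
  OIletter phi i = Some (homg H).
Proof. rewrite /OIletter (dep_ifF _ _ (negbTE H)); congr Some; exact: homgE. Qed.

Lemma oi_inj n m (phi : OIhom d n m) : injective (homf phi).
Proof.
move=> i j e; case: (ltngtP i j) => [h|h|/val_inj//].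
  by have := homf_mono phi h; rewrite e ltnn.
by have := homf_mono phi h; rewrite e ltnn.
Qed.

Lemma comp_letter_f n m k (psi : OIhom d m k) (phi : OIhom d n m) t :
  OIletter (OIcomp psi phi) (homf psi t) = OIletter phi t.
Proof.
case: (boolP (t \in codom (homf phi))) => Ht.
  rewrite (letter_in Ht) letter_in //.
  by move/codomP: Ht => [j ->]; apply/codomP; exists j.
have H' : homf psi t \notin codom (homf (OIcomp psi phi)).
  apply/codomP => [[j e]]; move/codomP: Ht; apply; exists j.
  exact: (oi_inj e).
rewrite (letter_out H') (letter_out Ht); congr Some.
rewrite /= /comp_g (dep_ifT _ _ (codom_f _ _)); apply: homgE.
exact: (iinv_f (@oi_inj _ _ psi)).
Qed.

Lemma comp_letter_out n m k (psi : OIhom d m k) (phi : OIhom d n m) t :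
  t \notin codom (homf psi) -> OIletter (OIcomp psi phi) t = OIletter psi t.
Proof.
move=> Ht.
have H' : t \notin codom (homf (OIcomp psi phi)).
  by apply/codomP => [[j e]]; move/codomP: Ht; apply; exists (homf phi j).
rewrite (letter_out H') (letter_out Ht); congr Some.
rewrite /= /comp_g (dep_ifF _ _ (negbTE Ht)); exact: homgE.
Qed.

Lemma sorted_enum_ord m : sorted (fun x y : 'I_m => x < y) (enum 'I_m).
Proof.
have -> : (fun x y : 'I_m => x < y) = relpre val ltn by [].
by rewrite -sorted_map val_enum_ord iota_ltn_sorted.
Qed.

Lemma sorted_codom n m (phi : OIhom d n m) :
  sorted (fun x y : 'I_m => x < y) (codom (homf phi)).
Proof.
rewrite codomE sorted_map; apply: sub_sorted (sorted_enum_ord n).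
by move=> i j; apply: homf_mono.
Qed.

Lemma ltord_trans m : transitive (fun x y : 'I_m => x < y).
Proof. by move=> x y z; apply: ltn_trans. Qed.

Lemma ltord_irr m : irreflexive (fun x y : 'I_m => x < y).
Proof. by move=> x; rewrite ltnn. Qed.

Lemma word_letters n m (phi phi' : OIhom d n m) :
  OIword phi = OIword phi' -> forall i, OIletter phi i = OIletter phi' i.
Proof. by move/eq_in_map => h i; apply: h; rewrite mem_enum. Qed.

Lemma word_inj n m (phi phi' : OIhom d n m) : OIword phi = OIword phi' -> phi = phi'.
Proof.
move=> /word_letters hl.
have hc : forall i, (i \in codom (homf phi)) = (i \in codom (homf phi')).
  move=> i; case: (boolP (i \in codom (homf phi))) => h1;
  case: (boolP (i \in codom (homf phi'))) => h2 //; have := hl i.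
    by rewrite (letter_in h1) (letter_out h2).
  by rewrite (letter_in h2) (letter_out h1).
have hf : homf phi =1 homf phi'.
  have e : codom (homf phi) = codom (homf phi').
    apply: (irr_sorted_eq (@ltord_trans m) (@ltord_irr m)); try exact: sorted_codom.
    exact: hc.
  move: e; rewrite !codomE => /eq_in_map h i; apply: h; by rewrite mem_enum.
move: hl hc hf; case: phi => f fm g; case: phi' => f' fm' g' /= hl hc hf.
have ef : f = f' := functional_extensionality _ _ hf.
subst f'; have -> : fm = fm' by apply: proof_irrelevance.
congr OIHom; apply: functional_extensionality_dep => t.
apply: functional_extensionality_dep => H.
have := hl t.
rewrite (letter_out (phi := OIHom fm g) H) (letter_out (phi := OIHom fm' g') H).
by case.
Qed.
End OI.

Lemma subseq_idx (T : eqType) (x0 : T) (s2 s1 : seq T) : subseq s1 s2 ->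
  exists p : nat -> nat, (forall i j, i < j -> j < size s1 -> p i < p j) /\
   (forall i, i < size s1 -> p i < size s2 /\ nth x0 s2 (p i) = nth x0 s1 i).
Proof.
elim: s2 s1 => [|y s2 IH] [|x s1] //=.
- by move=> _; exists id; split.
- by move=> _; exists id; split.
case: eqP => [<-|_] h.
  have [q [q1 q2]] := IH s1 h.
  exists (fun i => if i is i'.+1 then (q i').+1 else 0); split.
    by move=> [|i] [|j] //= hij hj; rewrite ltnS q1.
  by move=> [|i] //= hi; have [a b] := q2 i hi; rewrite ltnS.
have [q [q1 q2]] := IH (x :: s1) h.
exists (fun i => (q i).+1); split.
  by move=> i j hij hj; rewrite ltnS q1.
by move=> i hi; have [a b] := q2 i hi; rewrite ltnS.
Qed.

Lemma smono_inj a b (f : 'I_a -> 'I_b) : (forall i j : 'I_a, i < j -> f i < f j) -> injective f.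
Proof.
move=> hm i j e; case: (ltngtP i j) => [h|h|/val_inj//].
  by have := hm _ _ h; rewrite e ltnn.
by have := hm _ _ h; rewrite e ltnn.
Qed.

Section OI2.
Variable d : nat.

Lemma codom_filter m k (psi : OIhom d m k) :
  codom (homf psi) = [seq x <- enum 'I_k | x \in codom (homf psi)].
Proof.
apply: (irr_sorted_eq (@ltord_trans k) (@ltord_irr k)); first exact: sorted_codom.
  exact: (sorted_filter (@ltord_trans k) _ (sorted_enum_ord k)).
by move=> x; rewrite mem_filter mem_enum andbT.
Qed.

Lemma comp_subseq n m k (psi : OIhom d m k) (phi : OIhom d n m) :
  subseq (OIword phi) (OIword (OIcomp psi phi)).
Proof.
have -> : OIword phi = map (OIletter (OIcomp psi phi)) (codom (homf psi)).
  rewrite codomE -map_comp /OIword; apply: eq_map => t /=.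
  by rewrite comp_letter_f.
by rewrite codom_filter /OIword; apply: map_subseq; apply: filter_subseq.
Qed.

Lemma size_word n m (phi : OIhom d n m) : size (OIword phi) = m.
Proof. by rewrite size_map size_enum_ord. Qed.

Lemma nth_word n m (phi : OIhom d n m) (i : 'I_m) : nth None (OIword phi) i = OIletter phi i.
Proof. by rewrite /OIword (nth_map i) ?size_enum_ord // nth_ord_enum. Qed.

Lemma part2 (hd : 0 < d) n m m' (phi : OIhom d n m) (phi' : OIhom d n m') :
  (exists psi : OIhom d m m', OIcomp psi phi = phi') <-> subseq (OIword phi) (OIword phi').
Proof.
split; first by move=> [psi <-]; apply: comp_subseq.
move=> /(subseq_idx None) [p [p1 p2]].
rewrite !size_word in p1 p2.
have hp1 : forall i : 'I_m, p i < m' by move=> i; have [] := p2 i (ltn_ord i).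
pose pf := fun i : 'I_m => Ordinal (hp1 i).
have pfm : forall i j : 'I_m, i < j -> pf i < pf j.
  by move=> i j hij; rewrite /= p1.
have pfl : forall i, OIletter phi' (pf i) = OIletter phi i.
  move=> i; have [_ e] := p2 i (ltn_ord i).
  by rewrite -!nth_word.
have cover : forall t, t \notin codom pf -> t \notin codom (homf phi').
  move=> t; apply: contra => ht.
  have injA : injective (pf \o homf phi).
    exact: (inj_comp (smono_inj pfm) (@oi_inj d n m phi)).
  have sub : codom (pf \o homf phi) \subset codom (homf phi').
    apply/subsetP => x /codomP [j ->] /=.
    apply: contraT => hx; have := pfl (homf phi j).
    by rewrite (letter_out hx) (letter_in (codom_f _ _)).
  have := subset_cardP _ sub.
  rewrite (card_codom injA) (card_codom (@oi_inj _ _ _ phi')) !card_ord.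
  move=> /(_ erefl) /(_ t); rewrite ht => /codomP [j ->].
  exact: codom_f.
pose g := fun t (_ : t \notin codom pf) => odflt (Ordinal hd) (OIletter phi' t).
pose psi := OIHom pfm g.
exists psi; apply: word_inj; apply: eq_map => t.
case: (boolP (t \in codom pf)).
  move/codomP => [i ->].
  have -> : pf i = homf psi i by [].
  by rewrite comp_letter_f -pfl.
move=> Ht; have Ht2 : t \notin codom (homf psi) := Ht.
rewrite (comp_letter_out phi Ht2) (letter_out Ht2) /=.
by rewrite /g (letter_out (cover t Ht)).
Qed.
End OI2.

Lemma inf_pigeon (U : finType) (h : nat -> U) :
  exists a, forall N, exists k, N <= k /\ h k = a.
Proof.
apply: NNPP => H.
have H1 : forall a, exists N, forall k, N <= k -> h k != a.
  move=> a; apply: NNPP => Ha; apply: H; exists a => N; apply: NNPP => HN.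
  apply: Ha; exists N => k hk; apply/negP => /eqP e; apply: HN; by exists k.
have H2 : forall l : seq U, exists N, forall a, a \in l -> forall k, N <= k -> h k != a.
  elim=> [|a l [N2 IH]]; first by exists 0.
  have [N1 h1] := H1 a; exists (maxn N1 N2) => b; rewrite inE => /orP [/eqP ->|hb] k hk.
    by apply: h1; apply: leq_trans hk; apply: leq_maxl.
  by apply: IH => //; apply: leq_trans hk; apply: leq_maxr.
have [N hN] := H2 (enum U).
by have := hN (h N) (mem_enum _ _) N (leqnn N); rewrite eqxx.
Qed.

Section Higman.
Variable T : finType.
Definition bad (f : nat -> seq T) := forall i j, i < j -> ~~ subseq (f i) (f j).
Definition ext (p : seq (seq T)) :=
  exists f, bad f /\ forall i, i < size p -> f i = nth [::] p i.

Definition minP p w := ext (rcons p w) /\ forall w', size w' < size w -> ~ ext (rcons p w').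

Lemma min_exists p : ext p -> exists w, minP p w.
Proof.
case=> f [bf hf].
have [w0 hw0] : exists w, ext (rcons p w).
  exists (f (size p)); exists f; split=> // i; rewrite size_rcons ltnS leq_eqVlt.
  case/orP => [/eqP ->|hi]; first by rewrite nth_rcons ltnn eqxx.
  by rewrite nth_rcons hi hf.
apply: NNPP => Hn.
suff: forall k w, size w < k -> ~ ext (rcons p w) by move/(_ (size w0).+1 w0 (ltnSn _)).
elim=> [|k IH] w // hw hext; apply: Hn; exists w; split => // w' hw'.
by apply: IH; apply: leq_trans hw' _.
Qed.

Definition F p := epsilon (inhabits [::]) (minP p).
Fixpoint pre k := if k is k'.+1 then rcons (pre k') (F (pre k')) else [::].

Hypothesis H0 : exists f, bad f.

Lemma pre_ext k : ext (pre k).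
Proof.
elim: k => [|k IH] /=; first by case: H0 => f bf; exists f.
exact: (epsilon_spec (inhabits [::]) (minP (pre k)) (min_exists IH)).1.
Qed.

Lemma size_pre k : size (pre k) = k.
Proof. by elim: k => //= k IH; rewrite size_rcons IH. Qed.

Definition b k := F (pre k).

Lemma nth_pre k i : i < k -> nth [::] (pre k) i = b i.
Proof.
elim: k => // k IH; rewrite ltnS leq_eqVlt /= nth_rcons size_pre.
case/orP => [/eqP ->|hi]; first by rewrite ltnn eqxx.
by rewrite hi IH.
Qed.

Lemma b_bad : bad b.
Proof.
move=> i j hij; have [f [bf hf]] := pre_ext j.+1.
have e1 : f i = b i by rewrite hf ?size_pre ?nth_pre // ltnS ltnW.
have e2 : f j = b j by rewrite hf ?size_pre ?nth_pre.
by rewrite -e1 -e2; apply: bf.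
Qed.

Lemma b_min k w : size w < size (b k) -> ~ ext (rcons (pre k) w).
Proof.
exact: (epsilon_spec (inhabits [::]) (minP (pre k)) (min_exists (pre_ext k))).2.
Qed.

Lemma b_nonnil k : b k != [::].
Proof.
apply/eqP => e; have := b_bad (ltnSn k); by rewrite e sub0seq.
Qed.

Lemma subseq_behead (s t : seq T) : subseq s (behead t) -> subseq s t.
Proof. case: t => //= x t h; exact: subseq_trans h (subseq_cons _ _). Qed.

Lemma contra_false : False.
Proof.
have [a ha] := inf_pigeon (fun k => ohead (b k)).
pose nxt N := epsilon (inhabits 0) (fun k => N <= k /\ ohead (b k) = a).
have nxtP : forall N, N <= nxt N /\ ohead (b (nxt N)) = a.
  by move=> N; exact: (epsilon_spec (inhabits 0) (fun k => N <= k /\ ohead (b k) = a) (ha N)).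
pose fix idx j := if j is j'.+1 then nxt (idx j').+1 else nxt 0.
have idxS : forall j, idx j < idx j.+1 by move=> j; exact: (nxtP _).1.
have idxm : forall i j, i < j -> idx i < idx j.
  move=> i; elim=> // j IH; rewrite ltnS leq_eqVlt => /orP [/eqP ->|h] //.
  exact: ltn_trans (IH h) (idxS j).
have idx0 : forall j, idx 0 <= idx j by case=> // j; apply: ltnW; apply: idxm.
have idxa : forall j, ohead (b (idx j)) = a by case=> [|j]; apply: (nxtP _).2.
set k0 := idx 0.
pose g i := if i < k0 then b i else behead (b (idx (i - k0))).
apply: (@b_min k0 (behead (b k0))).
  by have := b_nonnil k0; case: (b k0).
exists g; split; last first.
  move=> i; rewrite size_rcons size_pre ltnS leq_eqVlt nth_rcons size_pre /g.
  case/orP => [/eqP ->|hi]; first by rewrite ltnn eqxx subnn.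
  by rewrite hi nth_pre.
move=> i j hij; rewrite /g.
case: ifP => hi; case: ifP => hj.
- exact: b_bad.
- apply/negP => /subseq_behead; apply/negP; apply: b_bad.
  apply: leq_trans hi (idx0 _).
- by have := leq_ltn_trans (ltnW hij) hj; rewrite hi.
- have hp : idx (i - k0) < idx (j - k0).
    apply: idxm; rewrite ltn_sub2r //.
    by apply: leq_ltn_trans hij; rewrite leqNgt hi.
  apply/negP => h; move/negP: (b_bad hp); apply.
  have := idxa (i - k0); have := idxa (j - k0).
  have := b_nonnil (idx (i - k0)); have := b_nonnil (idx (j - k0)).
  move: h; case: (b (idx (i - k0))) => // x s; case: (b (idx (j - k0))) => // y t /=.
  by move=> h _ _ <- [->]; rewrite eqxx.
Qed.
End Higman.

Theorem higman (T : finType) (f : nat -> seq T) : exists i j, i < j /\ subseq (f i) (f j).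
Proof.
apply: NNPP => H; apply: (@contra_false T); exists f => i j hij.
apply/negP => hs; apply: H; by exists i, j.
Qed.

Theorem mainTheorem3 (d n : nat) (hd : 1 <= d) :
  (forall (m : nat) (phi phi' : OIhom d n m), OIword phi = OIword phi' -> phi = phi')
  /\ (forall (m m' : nat) (phi : OIhom d n m) (phi' : OIhom d n m'),
        (exists psi : OIhom d m m', OIcomp psi phi = phi')
        <-> subseq (OIword phi) (OIword phi'))
  /\ (forall s : nat -> {m : nat & OIhom d n m},
        exists i j : nat, i < j /\ OIle (s i) (s j)).
Proof.
split; first by move=> m phi phi'; apply: word_inj.
split; first by move=> m m' phi phi'; apply: part2.
move=> s; have [i [j [hij hs]]] := higman (fun k => OIword (tagged (s k))).
by exists i, j; split=> //; rewrite /OIle; apply/(part2 hd).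
Qed.
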